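(* Let $G=(V,E)$ be a forest with $V=\{1,\dots,n\}$ and adjacency matrix $A$. Then $$\beta(G)=\min\{\mathbf{e}^\top x \mid x \text{ solves } \mathrm{LCP}(A+I,-\mathbf{e})\},$$ where $I$ is the $n\times n$ identity matrix and $\mathbf{e}$ is the all-ones vector in $\mathbb{R}^n$.
   Context: A forest is a simple graph (finite, undirected, no loops or multiple edges) with no cycles, i.e. a disjoint union of trees. Its adjacency matrix $A=[a_{ij}]$ has $a_{ij}=1$ iff $\{i,j\}\in E$. An independent set is maximal if it is not properly contained in another independent set; $\beta(G)$ denotes the minimum cardinality of a maximal independent set of $G$ (the independent domination number). A vector $x\in\mathbb{R}^n$ solves $\mathrm{LCP}(M,q)$ if $x\geq 0$, $Mx+q\geq 0$ and $x^\top(Mx+q)=0$. *)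

(* Defs.v *)
From HB Require Import structures.
From mathcomp Require Import all_boot all_order all_algebra.
From mathcomp Require Import reals.
Set Implicit Arguments. Unset Strict Implicit. Unset Printing Implicit Defensive.
Import Order.TTheory GRing.Theory Num.Theory.

Definition simple_graph (n : nat) (e : rel 'I_n) : Prop :=
  symmetric e /\ irreflexive e.

Definition has_cycle (n : nat) (e : rel 'I_n) : Prop :=
  exists c : seq 'I_n, (3 <= size c)%N /\ cycle e c /\ uniq c.

Definition forest (n : nat) (e : rel 'I_n) : Prop :=
  simple_graph e /\ ~ has_cycle e.

Definition independent (n : nat) (e : rel 'I_n) (S : {set 'I_n}) : bool :=
  [forall i in S, forall j in S, ~~ e i j].

Definition maximal_independent (n : nat) (e : rel 'I_n) (S : {set 'I_n}) : bool :=
  independent e S &&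
  [forall T : {set 'I_n}, (S \proper T) ==> ~~ independent e T].

Definition beta (n : nat) (e : rel 'I_n) : nat :=
  \big[minn/n]_(S : {set 'I_n} | maximal_independent e S) #|S|.

Local Open Scope ring_scope.

Definition adjacency (R : realType) (n : nat) (e : rel 'I_n) : 'M[R]_n :=
  \matrix_(i, j) (e i j)%:R.

Definition ones (R : realType) (n : nat) : 'cV[R]_n := const_mx 1.

Definition solves_LCP (R : realType) (n : nat) (M : 'M[R]_n) (q x : 'cV[R]_n) : Prop :=
  (forall i, 0 <= x i 0) /\
  (forall i, 0 <= (M *m x + q) i 0) /\
  (x^T *m (M *m x + q)) 0 0 = 0.

(* Main.v *)
Require Import Defs.
From mathcomp Require Import all_boot all_order all_algebra.
From mathcomp Require Import reals lra.
Set Implicit Arguments. Unset Strict Implicit.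
Import Order.TTheory GRing.Theory Num.Theory.
Lemma leaf_exists (n : nat) (e : rel 'I_n) (W : {set 'I_n}) :
  forest e -> W != set0 ->
  exists2 l, l \in W & forall u v, u \in W -> v \in W -> e l u -> e l v -> u = v.
Proof.
move=> [[esym eirr] nocyc] /set0Pn [x0 x0W].
case: (boolP [exists l in W, [forall u in W, forall v in W, e l u ==> e l v ==> (u == v)]]).
  case/exists_inP=> l lW /forall_inP H; exists l => // u v uW vW elu elv.
  by move/forall_inP: (H u uW) => /(_ v vW); rewrite elu elv => /eqP.
move/exists_inPn => H.
have ext: forall k, exists x, exists t, [/\ size t = k, uniq (x::t), all [in W] (x::t) & path e x t].
  elim=> [|k [x [t [st ut alt pt]]]]; first by exists x0, [::]; rewrite /= x0W.
  have xW : x \in W by move: alt => /= /andP[].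
  move/forall_inPn: (H x xW) => [u uW /forall_inPn [v vW]].
  rewrite negb_imply => /andP [exu]; rewrite negb_imply => /andP [exv neuv].
  have [u' /andP [u'W exu'] hu'] : exists2 u', (u' \in W) && e x u' & forall w t', t = w :: t' -> u' != w.
    case: t {st ut alt pt} => [|w t']; first by exists u; rewrite ?uW ?exu.
    case: (eqVneq u w) => [euw|neuw].
      by exists v; rewrite ?vW ?exv // => w0 t0 [<- _]; rewrite -euw eq_sym.
    by exists u; rewrite ?uW ?exu // => w0 t0 [<- _].
  case: (boolP (u' \in x :: t)) => [u'in|u'out].
    exfalso; apply: nocyc.
    have u'x : u' != x by apply: contraTneq exu' => ->; rewrite eirr.
    move: u'in; rewrite in_cons (negbTE u'x) /=.
    case: t hu' {st} ut alt pt => [//|w t'] hu' ut alt pt.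
    rewrite in_cons (negbTE (hu' w t' erefl)) /= => u't'.
    case/splitPr: u't' ut pt => t1 t2 ut pt.
    exists (x :: w :: t1 ++ [:: u']); split.
    - by rewrite /= size_cat /= addnS ltnS ltnS.
    - rewrite /cycle /= rcons_cat /=.
      move: pt; rewrite /= cat_path /= => /andP [exw /andP [p1 /andP [el _]]].
      rewrite exw /= cat_path p1 /= el esym exu'; split=> //.
      have : uniq ((x :: w :: t1 ++ [:: u']) ++ t2) by rewrite /= -catA.
      by rewrite cat_uniq => /andP [+ _].
  exists u', (x :: t); split.
  - by rewrite /= st.
  - by rewrite cons_uniq u'out ut.
  - by rewrite /= u'W.
  - by rewrite /= esym exu' pt.
have [x [t [st ut _ _]]] := ext n.
move: (card_uniqP ut) => /= cs.
have := max_card (mem (x :: t)); rewrite card_ord cs /= st ltnn.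
by [].
Qed.
Local Open Scope ring_scope.
Definition sW (R : realType) (n : nat) (e : rel 'I_n) (W : {set 'I_n}) (f : 'I_n -> R) i :=
  f i + \sum_(j | (j \in W) && e i j) f j.

Definition solW (R : realType) (n : nat) (e : rel 'I_n) (W : {set 'I_n}) (f : 'I_n -> R) :=
  forall i, i \in W -> [/\ 0 <= f i, 1 <= sW e W f i & (0 < f i -> sW e W f i = 1)].

Lemma rest_zero (R : realType) (n : nat) (e : rel 'I_n) (W : {set 'I_n}) (f : 'I_n -> R) (P : pred 'I_n) :
  (forall j, P j -> 0 <= f j) -> \sum_(j | P j) f j <= 0 -> forall j, P j -> f j = 0.
Proof.
move=> pos le0; apply: psumr_eq0P => //.
by apply/eqP; rewrite eq_le le0 sumr_ge0.
Qed.

Lemma good_exists (R : realType) (n : nat) (e : rel 'I_n) (W : {set 'I_n}) (f : 'I_n -> R) :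
  forest e -> W != set0 -> solW e W f ->
  exists2 p, p \in W & forall q, q \in W -> e p q -> 0 < f q ->
     forall r, r \in W -> e q r -> (r == p) || e p r.
Proof.
move=> fe Wn sol; have [[esym eirr] _] := fe.
have [l lW leaf] := @leaf_exists n e W fe Wn.
have fpos : forall j, (j \in W) -> 0 <= f j by move=> j /sol [].
case: (pickP [pred u | (u \in W) && e l u]) => [p /= /andP [pW elp] | nonb].
  have sl : sW e W f l = f l + f p.
    rewrite /sW (eq_bigl (pred1 p)) ?big_pred1_eq // => j /=.
    apply/idP/idP => [/andP [jW elj]|/eqP ->]; last by rewrite pW elp.
    by apply/eqP; apply: leaf.
  have [fl0 sl1 compl] := sol l lW.
  have [fp0 sp1 compp] := sol p pW.
  case: (ltrP 0 (f l)) => [flpos | flle].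
    case: (ltrP 0 (f p)) => [fppos | fple].
      have spl : sW e W f p = f p + f l + \sum_(j | ((j \in W) && e p j) && (j != l)) f j.
        by rewrite /sW (bigD1 l) /= ?addrA // lW (esym p l) elp.
      have rz := @rest_zero R n e W f [pred j | ((j \in W) && e p j) && (j != l)].
      have z : forall j, ((j \in W) && e p j) && (j != l) -> f j = 0.
        apply: rz => [j /andP [/andP [jW _] _]|]; first exact: fpos.
        move: (compp fppos) (compl flpos); rewrite spl sl => h1 h2.
        lra.
      exists p => // q qW epq fq r rW eqr.
      case: (eqVneq q l) eqr => [-> eqr|nql eqr].
        by rewrite (leaf r p rW pW eqr elp) eqxx.
      by move: fq; rewrite z ?ltxx // qW epq nql.
    exists l => // q qW elq fq.
    by move: fq; rewrite (leaf q p qW pW elq elp) ltNge fple.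
  have flz : f l = 0 by apply/eqP; rewrite eq_le flle fl0.
  have fppos : 0 < f p by apply: (lt_le_trans ltr01); rewrite -[f p]add0r -flz -sl.
  have z : forall j, (j \in W) && e p j -> f j = 0.
    apply: (@rest_zero R n e W f) => [j /andP [jW _]|]; first exact: fpos.
    move: (compp fppos) sl1; rewrite sl flz /sW; lra.
  exists p => // q qW epq; by rewrite z ?ltxx // qW epq.
exists l => // q qW elq; by move: (nonb q); rewrite /= qW elq.
Qed.
Lemma main_ind (R : realType) (n : nat) (e : rel 'I_n) : forest e ->
  forall k (W : {set 'I_n}) (f : 'I_n -> R), (#|W| <= k)%N -> solW e W f ->
  exists S : {set 'I_n}, [/\ S \subset W, independent e S,
     (forall i, i \in W -> (i \in S) || [exists j in S, e i j]) &
     #|S|%:R <= \sum_(i in W) f i].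
Proof.
move=> fe; have [[esym eirr] _] := fe.
elim=> [|k IH] W f hk sol.
- have W0 : W = set0 by apply/eqP; rewrite -cards_eq0 -leqn0.
  exists set0; split => //; first exact: sub0set.
  + by apply/forall_inP => i; rewrite inE.
  + by move=> i; rewrite W0 inE.
  + by rewrite cards0 sumr_ge0 // => i /sol [].
case: (boolP (W == set0)) => [/eqP W0|Wn].
  exists set0; split => //; first exact: sub0set.
  + by apply/forall_inP => i; rewrite inE.
  + by move=> i; rewrite W0 inE.
  + by rewrite cards0 sumr_ge0 // => i /sol [].
have fpos : forall j, (j \in W) -> 0 <= f j by move=> j /sol [].
have [p pW gp] := good_exists fe Wn sol.
pose Np := [set j | (j \in W) && ((j == p) || e p j)].
pose W' := W :\: Np.
have pNp : p \in Np by rewrite inE pW eqxx.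
have hk' : (#|W'| <= k)%N.
  have sub : W' \subset W :\ p.
    by apply/subsetP => j; rewrite !in_setD in_set1 => /andP [jN ->]; rewrite andbT; apply: contraNneq jN => ->.
  move: (subset_leq_card sub) (cardsD1 p W); rewrite pW => h1 h2.
  by rewrite -ltnS (leq_trans _ hk) // h2 add1n ltnS.
have eqsum : forall i, i \in W' ->
    \sum_(j | (j \in W) && e i j) f j = \sum_(j | (j \in W') && e i j) f j.
  move=> i; rewrite in_setD => /andP [iN iW].
  rewrite (bigID [in Np]) /= big1 ?add0r.
    by apply: eq_bigl => j; rewrite in_setD; case: (j \in W); case: (e i j); case: (j \in Np).
  move=> j /andP [/andP [jW eij] jN].
  apply/eqP; rewrite eq_le fpos // andbT leNgt; apply/negP => fj.
  move: iN; rewrite inE iW /=; apply/negP/negPn.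
  move: jN; rewrite inE jW /= => /orP [/eqP jp|epj].
    by rewrite -jp esym eij orbT.
  by apply: (gp j jW epj fj i iW); rewrite esym.
have sol' : solW e W' f.
  move=> i iW'; have := iW'; rewrite in_setD => /andP [_ iW].
  by rewrite /sW -eqsum //; exact: sol.
have [S' [S'sub S'ind S'dom S'card]] := IH W' f hk' sol'.
have notadj : forall j, j \in S' -> ~~ e p j.
  move=> j /(subsetP S'sub); rewrite in_setD inE => /andP [+ jW].
  by rewrite jW /= negb_or => /andP [_].
have pS' : p \notin S'.
  by apply/negP => /(subsetP S'sub); rewrite in_setD pNp.
exists (p |: S'); split.
- apply/subsetP => i; rewrite in_setU1 => /orP [/eqP ->|/(subsetP S'sub)] //.
  by rewrite in_setD => /andP [].
- apply/forall_inP => i; rewrite in_setU1 => /orP [/eqP ->|iS].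
    apply/forall_inP => j; rewrite in_setU1 => /orP [/eqP ->|jS]; first by rewrite eirr.
    exact: notadj.
  apply/forall_inP => j; rewrite in_setU1 => /orP [/eqP ->|jS].
    by rewrite esym; exact: notadj.
  by move/forall_inP: S'ind => /(_ i iS) /forall_inP; apply.
- move=> i iW; case: (boolP (i \in Np)) => [|iN].
    rewrite inE iW /= => /orP [/eqP ->|epi]; first by rewrite setU11.
    by apply/orP; right; apply/exists_inP; exists p; rewrite ?setU11 // esym.
  have : i \in W' by rewrite in_setD iN iW.
  move/S'dom => /orP [iS|/exists_inP [j jS eij]].
    by rewrite in_setU1 iS orbT.
  by apply/orP; right; apply/exists_inP; exists j; rewrite // in_setU1 jS orbT.
- have sumsplit : \sum_(i in W) f i = sW e W f p + \sum_(i in W') f i.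
    rewrite (bigID [in Np]) /=; congr (_ + _).
      rewrite (bigD1 p) /=; last by rewrite pW pNp.
      congr (_ + _); apply: eq_bigl => j; rewrite inE.
      case: (eqVneq j p) => [->|njp]; first by rewrite eirr !andbF.
      by case: (j \in W); case: (e p j).
    by apply: eq_bigl => j; rewrite in_setD andbC.
  have [_ sp1 _] := sol p pW.
  rewrite sumsplit cardsU1 pS' natrD.
  rewrite [true%:R]/=; lra.
Qed.
Local Close Scope ring_scope.
Lemma maxind_dom (n : nat) (e : rel 'I_n) (S : {set 'I_n}) :
  symmetric e -> irreflexive e -> maximal_independent e S ->
  forall i, (i \in S) || [exists j in S, e i j].
Proof.
move=> esym eirr /andP [ind /forallP mx] i.
case: (boolP (i \in S)) => //= iS.
have pr : S \proper i |: S.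
  by apply/properP; split; [exact: subsetUr | exists i; rewrite ?setU11].
move: (mx (i |: S)); rewrite pr /= => /forall_inPn [a aT /forall_inPn [b bT]].
rewrite negbK => eab.
move: aT bT; rewrite !in_setU1 => /orP [/eqP ea|aS] /orP [/eqP eb|bS].
- by move: eab; rewrite ea eb eirr.
- by apply/exists_inP; exists b; rewrite // -ea.
- by apply/exists_inP; exists a; rewrite // esym -eb.
- by move/forall_inP: ind => /(_ a aS) /forall_inP /(_ b bS); rewrite eab.
Qed.

Lemma dom_maxind (n : nat) (e : rel 'I_n) (S : {set 'I_n}) :
  independent e S -> (forall i, (i \in S) || [exists j in S, e i j]) ->
  maximal_independent e S.
Proof.
move=> ind dom; rewrite /maximal_independent ind /=.
apply/forallP => T; apply/implyP => /properP [sub [i iT iS]].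
move: (dom i); rewrite (negbTE iS) /= => /exists_inP [j jS eij].
apply/negP => /forall_inP /(_ i iT) /forall_inP /(_ j (subsetP sub j jS)).
by rewrite eij.
Qed.

Lemma beta_le (n : nat) (e : rel 'I_n) (S : {set 'I_n}) :
  maximal_independent e S -> (beta e <= #|S|)%N.
Proof.
move=> mS; rewrite /beta.
have : S \in index_enum {set 'I_n} by rewrite mem_index_enum.
elim: (index_enum _) => [//|a s IH]; rewrite big_cons in_cons.
case/orP => [/eqP <-|/IH h]; first by rewrite mS geq_minl.
by case: ifP => // _; rewrite geq_min h orbT.
Qed.

Lemma beta_attained (n : nat) (e : rel 'I_n) :
  exists2 S, maximal_independent e S & beta e = #|S|.
Proof.
have i0 : independent e set0 by apply/forall_inP => i; rewrite inE.
case: (arg_maxnP (fun S : {set 'I_n} => #|S|) i0) => Sm indm maxm.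
have mSm : maximal_independent e Sm.
  rewrite /maximal_independent indm /=; apply/forallP => T; apply/implyP => pr.
  apply/negP => indT; move: (maxm T indT) (proper_card pr).
  by move=> /= a; rewrite ltnNge a.
case: (arg_minnP (fun S : {set 'I_n} => #|S|) mSm) => S0 mS0 minS0.
exists S0 => //; apply/anti_leq; rewrite beta_le //=.
rewrite /beta; apply: (big_ind (fun m => #|S0| <= m)%N).
- by have := max_card (mem S0); rewrite card_ord.
- by move=> a b ha hb; rewrite leq_min ha hb.
- exact: minS0.
Qed.
Local Open Scope ring_scope.
Lemma entryE (R : realType) (n : nat) (e : rel 'I_n) (x : 'cV[R]_n) i :
  ((adjacency R e + 1%:M) *m x + - ones R n) i 0 = x i 0 + \sum_(j | e i j) x j 0 - 1.
Proof.
rewrite mulmxDl mul1mx !mxE [X in X - 1]addrC; congr (_ + _ - _).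
rewrite [RHS]big_mkcond /=; apply: eq_bigr => j _; rewrite !mxE.
by case: (e i j); rewrite ?mul1r ?mul0r.
Qed.

Lemma dotE (R : realType) (n : nat) (x y : 'cV[R]_n) :
  (x^T *m y) 0 0 = \sum_i x i 0 * y i 0.
Proof. by rewrite mxE; apply: eq_bigr => i _; rewrite mxE. Qed.

Lemma onesE (R : realType) (n : nat) (x : 'cV[R]_n) :
  ((ones R n)^T *m x) 0 0 = \sum_i x i 0.
Proof. by rewrite dotE; apply: eq_bigr => i _; rewrite mxE mul1r. Qed.

Theorem theorem2 (R : realType) (n : nat) (e : rel 'I_n) :
  forest e ->
  let M := adjacency R e + 1%:M in
  let q := - ones R n in
  (exists2 x : 'cV[R]_n, solves_LCP M q x & ((ones R n)^T *m x) 0 0 = (beta e)%:R) /\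
  (forall x : 'cV[R]_n, solves_LCP M q x -> (beta e)%:R <= ((ones R n)^T *m x) 0 0).
Proof.
move=> fe M q; have [[esym eirr] _] := fe.
split.
  have [S0 mS0 bS0] := beta_attained e.
  have := mS0; case/andP => ind0 _.
  have dom0 := maxind_dom esym eirr mS0.
  pose x : 'cV[R]_n := \col_i (i \in S0)%:R.
  have xE : forall i, x i 0 = (i \in S0)%:R by move=> i; rewrite mxE.
  have ent : forall i, i \in S0 -> (M *m x + q) i 0 = 0.
    move=> i iS; rewrite /M /q entryE xE iS big1 ?addr0 ?subrr // => j eij.
    rewrite xE; case: (boolP (j \in S0)) => // jS.
    by move/forall_inP: ind0 => /(_ i iS) /forall_inP /(_ j jS); rewrite eij.
  exists x; last first.
    rewrite onesE bS0 (eq_bigr (fun i => (i \in S0)%:R)) //.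
    have -> : (#|S0|%:R : R) = \sum_(i in S0) (1 : R) by rewrite sumr_const.
    by rewrite [RHS]big_mkcond; apply: eq_bigr => i _; case: (i \in S0).
  split; first by move=> i; rewrite xE ler0n.
  split.
    move=> i; case: (boolP (i \in S0)) => iS; first by rewrite ent.
    move: (dom0 i); rewrite (negbTE iS) /= => /exists_inP [j jS eij].
    rewrite /M /q entryE xE (negbTE iS) add0r subr_ge0 (bigD1 j) //= xE jS.
    by rewrite lerDl sumr_ge0 // => k _; rewrite xE ler0n.
  rewrite dotE big1 // => i _; case: (boolP (i \in S0)) => iS; first by rewrite ent ?mulr0.
  by rewrite xE (negbTE iS) mul0r.
move=> x [xpos [ypos compl]].
pose f i := x i 0.
have yE : forall i, (M *m x + q) i 0 = f i + \sum_(j | e i j) f j - 1 by move=> i; rewrite entryE.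
have sWE : forall i, sW e setT f i = f i + \sum_(j | e i j) f j.
  by move=> i; rewrite /sW; congr (_ + _); apply: eq_bigl => j; rewrite in_setT.
have terms0 : forall i, f i * (M *m x + q) i 0 = 0.
  move=> i; have h : \sum_i f i * (M *m x + q) i 0 = 0 by rewrite -dotE.
  have pos : forall j, true -> 0 <= f j * (M *m x + q) j 0 by move=> j _; exact: mulr_ge0 (xpos j) (ypos j).
  exact: (psumr_eq0P pos h).
have sol : solW e setT f.
  move=> i _; split; first exact: xpos.
    by rewrite sWE; move: (ypos i); rewrite yE; lra.
  move=> fi; move: (terms0 i) => /eqP; rewrite mulf_eq0 gt_eqF //= => /eqP.
  by rewrite yE sWE; lra.
have [S [_ ind dom card]] := @main_ind R n e fe n setT f (eq_leq (etrans (cardsT _) (card_ord n))) sol.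
have mS := dom_maxind ind (fun i => dom i (in_setT i)).
have hs : \sum_(i in [set: 'I_n]) f i = \sum_i x i 0 by apply: eq_bigl => i; rewrite in_setT.
rewrite onesE -hs; apply: le_trans card.
by rewrite ler_nat beta_le.
Qed.
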